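(* For every $n\ge1$, every greedy-from-the-bottom (GFB) tree $T$ with $n$ leaves satisfies $\mathcal{C}(T)=c_n$.
   Context: Bifurcating trees: rooted trees in which every internal node has exactly two children, considered up to isomorphism; $\mathcal{T}_n$ is the set of such trees with $n$ leaves. For a node $w$, $\kappa_T(w)$ is its number of descendant leaves. The Colless index is $\mathcal{C}(T)=\sum_{v}|\kappa_T(v_1)-\kappa_T(v_2)|$, summed over internal nodes $v$ with children $v_1,v_2$; $c_n=\min\{\mathcal{C}(T):T\in\mathcal{T}_n\}$. GFB trees: start with a multiset of $n$ single-node trees; while the multiset has more than one tree, remove a tree $u$ with the minimum number of leaves, then remove a tree $v$ with the minimum number of leaves among the remaining trees, and insert the tree consisting of a new root whose two children are the roots of $u$ and $v$. Any tree that can be the final remaining tree of this procedure is a GFB tree with $n$ leaves. *)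

(* Defs.v *)
From mathcomp Require Import all_boot.
From Stdlib Require Permutation.
Set Implicit Arguments. Unset Strict Implicit. Unset Printing Implicit Defensive.

(* Rooted bifurcating trees (plane representatives; every internal node has
   exactly two children).  All notions below are invariant under swapping
   children, so working with representatives is harmless. *)
Inductive tree : Type :=
  | Leaf : tree
  | Node : tree -> tree -> tree.

Fixpoint leaves (t : tree) : nat :=
  match t with
  | Leaf => 1
  | Node l r => leaves l + leaves r
  end.

Definition absdiff (a b : nat) : nat := maxn a b - minn a b.

Fixpoint colless (t : tree) : nat :=
  match t with
  | Leaf => 0
  | Node l r => colless l + colless r + absdiff (leaves l) (leaves r)
  end.

Definition is_cn (n c : nat) : Prop :=
  (exists t, leaves t = n /\ colless t = c) /\
  (forall t, leaves t = n -> c <= colless t).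

Definition gfb_step (s s' : list tree) : Prop :=
  exists u v rest,
    Permutation.Permutation s (u :: v :: rest) /\
    (forall t, List.In t (v :: rest) -> leaves u <= leaves t) /\
    (forall t, List.In t rest -> leaves v <= leaves t) /\
    s' = Node u v :: rest.

Inductive gfb_reach : list tree -> list tree -> Prop :=
  | gfb_refl s : gfb_reach s s
  | gfb_next s s' s'' : gfb_step s s' -> gfb_reach s' s'' -> gfb_reach s s''.

Definition GFB (n : nat) (T : tree) : Prop :=
  gfb_reach (nseq n Leaf) [:: T].

(* Main.v *)
Require Import Defs.
From mathcomp Require Import all_boot zify.
From Stdlib Require Import Permutation Lia.
Set Warnings "-notation-overridden".

Fixpoint fb (k n : nat) : nat :=
  match k with
  | 0 => 0
  | k'.+1 => if n <= 1 then 0 else fb k' (n %/ 2) + fb k' (n - n %/ 2) + n %% 2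
  end.
Definition f n := fb n n.

Lemma fb_indep k1 : forall k2 n, n <= k1 -> n <= k2 -> fb k1 n = fb k2 n.
Proof.
elim: k1 => [|k1 IH] [|k2] n h1 h2 /=.
- by [].
- have -> : n = 0 by lia. by [].
- have -> : n = 0 by lia. by [].
- case: ifP => // hn.
  rewrite (IH k2 (n %/ 2)); try lia.
  by rewrite (IH k2 (n - n %/ 2)); try lia.
Qed.

Lemma fE n : 2 <= n -> f n = f (n %/ 2) + f (n - n %/ 2) + n %% 2.
Proof.
move=> h. rewrite /f. case: n h => [|n] h //=.
case: ifP => hn; first by lia.
rewrite (@fb_indep n (n.+1 %/ 2) (n.+1 %/ 2)); try lia.
rewrite (@fb_indep n (n.+1 - n.+1 %/ 2) (n.+1 - n.+1 %/ 2)); try lia.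
Qed.

Lemma f0 : f 0 = 0. Proof. by []. Qed.
Lemma f1 : f 1 = 0. Proof. by []. Qed.

Lemma f_even m : f (m.*2) = (f m).*2.
Proof.
case: m => [|m]; first by [].
rewrite fE; last by lia.
have -> : m.+1.*2 %/ 2 = m.+1 by lia.
have -> : m.+1.*2 - m.+1 = m.+1 by lia.
have -> : m.+1.*2 %% 2 = 0 by lia.
lia.
Qed.

Lemma f_odd m : 1 <= m -> f (m.*2.+1) = f m + f m.+1 + 1.
Proof.
move=> hm. rewrite fE; last by lia.
have -> : m.*2.+1 %/ 2 = m by lia.
have -> : m.*2.+1 - m = m.+1 by lia.
have -> : m.*2.+1 %% 2 = 1 by lia.
by [].
Qed.

Definition Hyp N := forall a b c, a + b = c -> c < N -> 1 <= a -> 1 <= b ->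
  f c <= f a + f b + absdiff a b.

Lemma parity a : exists x, a = x.*2 \/ a = x.*2.+1.
Proof. exists a./2; case: (odd a) (odd_double_half a) => /= <-; [right|left]; lia. Qed.

Lemma step_even N x b : Hyp N -> x.*2 + b = N -> 1 <= x -> 1 <= b ->
  f N <= f (x.*2) + f b + absdiff (x.*2) b.
Proof.
move=> H hN hx hb; rewrite -hN /absdiff.
have [y [eb|eb]] := parity b; subst b.
- have -> : x.*2 + y.*2 = (x + y).*2 by lia.
  rewrite !f_even.
  have h := H x y (x + y) erefl ltac:(lia) hx ltac:(lia).
  move: h; rewrite /absdiff; lia.
- case: y hb hN => [|y] hb hN.
  + have -> : x.*2 + 1 = x.*2.+1 by lia.
    rewrite f_odd // f_even f1.
    have h := H x 1 x.+1 ltac:(lia) ltac:(lia) hx ltac:(lia).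
    move: h; rewrite /absdiff f1; lia.
  + have -> : x.*2 + y.+1.*2.+1 = (x + y.+1).*2.+1 by lia.
    rewrite f_odd; last lia. rewrite f_even f_odd; last lia.
    have h1 := H x y.+1 (x + y.+1) erefl ltac:(lia) hx ltac:(lia).
    have h2 := H x y.+2 (x + y.+1).+1 ltac:(lia) ltac:(lia) hx ltac:(lia).
    move: h1 h2; rewrite /absdiff; lia.
Qed.

Lemma absdiffC a b : absdiff a b = absdiff b a.
Proof. rewrite /absdiff; lia. Qed.

Lemma main_case N a b : Hyp N -> a + b = N -> 1 <= a -> 1 <= b ->
  f N <= f a + f b + absdiff a b.
Proof.
move=> H hab ha hb.
have [x [ea|ea]] := parity a.
  subst a; apply: step_even H hab _ hb; lia.
have [y [eb|eb]] := parity b.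
  subst b; rewrite absdiffC.
  rewrite [f a + _]addnC.
  apply: step_even H _ _ ha; lia.
subst a b; rewrite -hab.
have -> : x.*2.+1 + y.*2.+1 = (x + y).+1.*2 by lia.
rewrite f_even /absdiff.
case: x ha H hab => [|x] ha H hab; case: y hb H hab => [|y] hb H hab.
- by [].
- rewrite f1 f_odd; last lia.
  have h := H y.+1 1 y.+2 ltac:(lia) ltac:(lia) ltac:(lia) ltac:(lia).
  move: h; rewrite /absdiff f1. rewrite add0n. lia.
- rewrite f1 f_odd; last lia.
  have h := H x.+1 1 x.+2 ltac:(lia) ltac:(lia) ltac:(lia) ltac:(lia).
  move: h; rewrite /absdiff f1. rewrite !addn0. lia.
- rewrite (f_odd x.+1) // (f_odd y.+1) //.
  have h1 := H x.+2 y.+1 (x.+1 + y.+1).+1 ltac:(lia) ltac:(lia) ltac:(lia) ltac:(lia).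
  have h2 := H x.+1 y.+2 (x.+1 + y.+1).+1 ltac:(lia) ltac:(lia) ltac:(lia) ltac:(lia).
  move: h1 h2; rewrite /absdiff; lia.
Qed.

Lemma hyp_all N : Hyp N.
Proof.
elim: N => [|N IH] a b c hc hN ha hb; first lia.
case: (ltnP c N) => h; first exact: IH.
have -> : c = N by lia.
apply: main_case IH _ ha hb; lia.
Qed.

Lemma fsub a b : 1 <= a -> 1 <= b -> f (a + b) <= f a + f b + absdiff a b.
Proof. move=> ha hb; exact: (hyp_all (a + b).+1 a b (a + b) erefl (ltnSn _) ha hb). Qed.

Lemma leaves_pos t : 1 <= leaves t.
Proof. elim: t => //= l IHl r IHr; lia. Qed.

Lemma lower t : f (leaves t) <= colless t.
Proof.
elim: t => [|l IHl r IHr] //=.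
have := @fsub _ _ (leaves_pos l) (leaves_pos r). lia.
Qed.

Lemma balanced n : 1 <= n -> exists t, leaves t = n /\ colless t = f n.
Proof.
elim: n {-2}n (leqnn n) => [|N IH] n hn h1; first lia.
case: (leqP n 1) => h2.
  have -> : n = 1 by lia. by exists Leaf.
have [l [hl cl]] := IH (n %/ 2) ltac:(lia) ltac:(lia).
have [r [hr cr]] := IH (n - n %/ 2) ltac:(lia) ltac:(lia).
exists (Node l r); split => /=; first lia.
rewrite cl cr hl hr (@fE n h2) /absdiff. lia.
Qed.

Section Gen.
Variables (A : Type) (w : A -> nat) (c : A -> A -> A).

Definition gstep (S S' : list A) : Prop :=
  exists u v rest,
    Permutation S (u :: v :: rest) /\
    (forall t, List.In t (v :: rest) -> w u <= w t) /\
    (forall t, List.In t rest -> w v <= w t) /\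
    S' = c u v :: rest.

Inductive greach : list A -> list A -> Prop :=
  | grefl S : greach S S
  | gnext S S' S'' : gstep S S' -> greach S' S'' -> greach S S''.
Arguments gnext {S S' S''}.

Lemma greach_trans S1 S2 S3 : greach S1 S2 -> greach S2 S3 -> greach S1 S3.
Proof.
elim=> // S S' S'' hs _ IH h; exact: (gnext hs (IH h)).
Qed.

Lemma getmin (l : list A) : l <> nil -> exists u rest,
  Permutation l (u :: rest) /\ forall t, List.In t rest -> w u <= w t.
Proof.
elim: l => [//|x l IH] _.
case: l IH => [|y l] IH.
  by exists x, nil; split.
have [u [rest [hp hm]]] := IH ltac:(by []).
case: (leqP (w x) (w u)) => h.
  exists x, (y :: l); split => // t ht.
  have : List.In t (u :: rest) by apply: Permutation_in hp ht.
  case=> [<- //|ht']. have := hm t ht'. lia.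
exists u, (x :: rest); split.
  apply: perm_trans (perm_skip x hp) _. exact: perm_swap.
move=> t [<-|ht]; [lia|exact: hm].
Qed.

Lemma gexists : forall n (S : list A), length S = n.+1 -> exists x, greach S [:: x].
Proof.
elim=> [|n IH] S hl.
  case: S hl => [|x [|y S]] //= _. by exists x; apply: grefl.
have [u [R [hp hm]]] := @getmin S ltac:(by case: S hl).
have hR : length R = n.+1.
  have := Permutation_length hp. rewrite hl /=. by case.
have [v [rest [hp2 hm2]]] := @getmin R ltac:(by case: R hR hp hm).
have [x hx] := IH (c u v :: rest) ltac:(have := Permutation_length hp2; rewrite hR /=; lia).
exists x. apply: gnext hx. exists u, v, rest; split.
  apply: perm_trans hp _. exact: perm_skip.
split => // t ht. apply: hm. exact: Permutation_in (Permutation_sym hp2) ht.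
Qed.
End Gen.
Arguments greach {A} w c.
Arguments gstep {A} w c.
Arguments gnext {A w c S S' S''}.
Arguments grefl {A w c}.
Arguments greach_trans {A w c S1 S2 S3}.

Lemma transfer (A B : Type) (w : A -> nat) (c : A -> A -> A)
  (w' : B -> nat) (c' : B -> B -> B) (phi : A -> B) (I : list A -> Prop)
  (H : forall S u v rest, I S -> Permutation S (u :: v :: rest) ->
     (forall t, List.In t (v :: rest) -> w u <= w t) ->
     (forall t, List.In t rest -> w v <= w t) ->
     I (c u v :: rest) /\
     (forall t, List.In t (v :: rest) -> w' (phi u) <= w' (phi t)) /\
     (forall t, List.In t rest -> w' (phi v) <= w' (phi t)) /\
     phi (c u v) = c' (phi u) (phi v)) :
  forall S S', greach w c S S' -> I S ->
    greach w' c' (List.map phi S) (List.map phi S').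
Proof.
move=> S S'; elim=> [S0|S0 S1 S2 [u [v [rest [hp [hm1 [hm2 ->]]]]]] _ IH] hI.
  exact: grefl.
have [hI' [h1 [h2 h3]]] := H _ _ _ _ hI hp hm1 hm2.
apply: gnext (IH hI').
exists (phi u), (phi v), (List.map phi rest); split.
  exact: (Permutation_map phi hp).
split.
  move=> t' ht'; have [t [<- ht]] := proj1 (List.in_map_iff phi (v :: rest) t') ht'. exact: h1.
split.
  move=> t' ht'; have [t [<- ht]] := proj1 (List.in_map_iff phi rest t') ht'. exact: h2.
by rewrite /= h3.
Qed.

Notation P := (nat * nat)%type.
Definition wP (p : P) : nat := p.1.
Definition cP (p q : P) : P := (p.1 + q.1, p.2 + q.2 + absdiff p.1 q.1).
Definition sumsnd (S : list P) : nat := List.fold_right (fun p acc => p.2 + acc) 0 S.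

Lemma sumsnd_perm S S' : Permutation S S' -> sumsnd S = sumsnd S'.
Proof. elim=> //= *; lia. Qed.

Lemma minuniq (a b : nat) l m : Permutation (a :: l) (b :: m) ->
  (forall x, List.In x l -> a <= x) -> (forall x, List.In x m -> b <= x) ->
  a = b /\ Permutation l m.
Proof.
move=> hp hl hm.
have hab : a = b.
  have ha : List.In a (b :: m) by apply: (Permutation_in _ hp); left.
  have hb : List.In b (a :: l) by apply: (Permutation_in _ (Permutation_sym hp)); left.
  case: ha => [//|ha]; case: hb => [//|hb].
  have := hl _ hb; have := hm _ ha; lia.
split => //. subst b. exact: Permutation_cons_inv hp.
Qed.

Lemma minmap (a : P) l : (forall t, List.In t l -> wP a <= wP t) ->
  forall x, List.In x (List.map fst l) -> a.1 <= x.
Proof.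
move=> h x hx; have [t [<- ht]] := proj1 (List.in_map_iff fst l x) hx. exact: h.
Qed.

Lemma determ S1 S1' : greach wP cP S1 S1' -> forall p1, S1' = [:: p1] ->
  forall S2 p2, greach wP cP S2 [:: p2] ->
  Permutation (List.map fst S1) (List.map fst S2) ->
  p1.2 + sumsnd S2 = p2.2 + sumsnd S1.
Proof.
elim=> [S|S S' S'' [u1 [v1 [r1 [hp1 [hm1 [hn1 ->]]]]]] hr IH] p1 e S2 p2 h2 hp.
  subst S. inversion h2; subst.
    rewrite /=; lia.
  case: H => [u [v [rest [hp' _]]]].
  have := Permutation_length hp; have := Permutation_length (Permutation_map fst hp').
  rewrite !List.length_map /=. lia.
inversion h2; subst.
  have := Permutation_length hp; have := Permutation_length (Permutation_map fst hp1).
  rewrite !List.length_map /=. lia.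
case: H => [u2 [v2 [r2 [hp2 [hm2 [hn2 e2]]]]]]. subst S'0.
have hP : Permutation (List.map fst (u1 :: v1 :: r1)) (List.map fst (u2 :: v2 :: r2)).
  apply: Permutation_trans (Permutation_map fst (Permutation_sym hp1)) _.
  apply: Permutation_trans hp _. exact: (Permutation_map fst hp2).
have [eu hP1] := @minuniq _ _ _ _ hP (@minmap _ _ hm1) (@minmap _ _ hm2).
have [ev hP2] := @minuniq _ _ _ _ hP1 (@minmap _ _ hn1) (@minmap _ _ hn2).
have hP3 : Permutation (List.map fst (cP u1 v1 :: r1)) (List.map fst (cP u2 v2 :: r2)).
  simpl. rewrite eu ev. constructor. exact: hP2.
have := IH p1 erefl _ p2 H0 hP3.
rewrite (@sumsnd_perm _ _ hp1) (@sumsnd_perm _ _ hp2) /= eu ev. lia.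
Qed.

Definition phiT (t : tree) : P := (leaves t, colless t).

Lemma gfb_to_P S S' : gfb_reach S S' -> greach wP cP (List.map phiT S) (List.map phiT S').
Proof.
move=> h.
have h2 : greach leaves Node S S'.
  elim: h => [s|s s' s'' hs _ IH]; first exact: grefl.
  exact: (gnext hs IH).
apply: (@transfer _ _ leaves Node wP cP phiT (fun _ => True) _ S S' h2 I).
move=> S0 u v rest _ hp h1 h3.
by split; [|split; [|split]].
Qed.

Lemma In_nseq (A : Type) n (x t : A) : List.In t (nseq n x) -> t = x.
Proof. elim: n => //= n IH [<-|h] //; exact: IH. Qed.
Arguments In_nseq {A n x t}.

Lemma map_nseqL (A B : Type) (g : A -> B) n x : List.map g (nseq n x) = nseq n (g x).
Proof. by elim: n => //= n ->. Qed.

Lemma nseq_snoc (A : Type) n (x : A) : nseq n.+1 x = (nseq n x ++ [:: x])%list.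
Proof. by elim: n => //= n <-. Qed.

Lemma phase1 k : forall j tail, (forall t : P, List.In t tail -> 1 <= t.1) ->
  greach wP cP (nseq j (2,0) ++ nseq k.*2 (1,0) ++ tail)%list (nseq (j + k) (2,0) ++ tail)%list.
Proof.
elim: k => [|k IH] j tail ht.
  rewrite addn0 /=. exact: grefl.
rewrite -addSnnS.
apply: gnext (IH j.+1 tail ht).
exists (1,0), (1,0), (nseq j (2,0) ++ nseq k.*2 (1,0) ++ tail)%list.
split.
  rewrite /=.
  apply: Permutation_trans (Permutation_sym (Permutation_middle _ _ _)) _.
  apply: perm_skip. exact: (Permutation_sym (Permutation_middle _ _ _)).
have hall : forall t, List.In t (nseq j (2,0) ++ nseq k.*2 (1,0) ++ tail)%list -> 1 <= t.1.
  move=> t h; case: (List.in_app_or _ _ _ h) => [/In_nseq -> //|h'].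
  case: (List.in_app_or _ _ _ h') => [/In_nseq -> //|]; exact: ht.
split.
  move=> t [<- //|]; exact: hall.
split; first exact: hall.
by [].
Qed.

Notation Q := (P * P)%type.
Definition wQ (q : Q) : nat := q.1.1 + q.2.1.
Definition cQ (q q' : Q) : Q := (cP q.1 q'.1, cP q.2 q'.2).
Definition sumE (S : list Q) : nat := List.fold_right (fun q acc => q.2.1 - q.1.1 + acc) 0 S.
Definition good (q : Q) := q.1.1 <= q.2.1 /\ q.2.1 <= q.1.1 + 1.
Definition InvQ (S : list Q) := (forall t, List.In t S -> good t) /\ sumE S <= 1.

Lemma sumE_perm S S' : Permutation S S' -> sumE S = sumE S'.
Proof. elim=> //= *; lia. Qed.

Lemma InvQ_step S u v rest : InvQ S -> Permutation S (u :: v :: rest) ->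
  InvQ (cQ u v :: rest) /\ good u /\ (forall t, List.In t (v :: rest) -> good t).
Proof.
move=> [hg hs] hp.
have hg' : forall t, List.In t (u :: v :: rest) -> good t.
  move=> t ht; apply: hg; exact: (Permutation_in _ (Permutation_sym hp) ht).
have hs' := @sumE_perm _ _ hp. rewrite hs' /= in hs.
have gu := hg' u (or_introl erefl).
have gv := hg' v (or_intror (or_introl erefl)).
split; last by split; [|move=> t ht; apply: hg'; right].
split.
  move=> t [<-|ht]; last by apply: hg'; right; right.
  move: gu gv hs; rewrite /good /cQ /cP /=; move=> [? ?] [? ?] ?; split; lia.
move: gu gv hs; rewrite /good /cQ /cP /=; lia.
Qed.

Lemma transQ (phi : Q -> P)
  (Hm : forall u t, good u -> good t -> wQ u <= wQ t -> wP (phi u) <= wP (phi t))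
  (Hc : forall u v, good u -> good v -> wQ u <= wQ v -> phi (cQ u v) = cP (phi u) (phi v)) :
  forall S S', greach wQ cQ S S' -> InvQ S -> greach wP cP (List.map phi S) (List.map phi S').
Proof.
move=> S S' h hI.
apply: (@transfer _ _ wQ cQ wP cP phi InvQ _ S S' h hI).
move=> S0 u v rest hI0 hp h1 h2.
have [hI1 [gu gr]] := @InvQ_step _ _ _ _ hI0 hp.
split => //. split.
  move=> t ht; apply: Hm => //; [exact: gr|exact: h1].
split.
  move=> t ht; apply: Hm; [apply: gr; left|apply: gr; right|exact: h2] => //.
apply: Hc => //; [apply: gr; left|apply: h1; left] => //.
Qed.

Definition sig (q : Q) : P := (q.1.1 + q.2.1, q.1.2 + q.2.2).

Lemma length_nseq (A : Type) n (x : A) : length (nseq n x) = n.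
Proof. by elim: n => //= n ->. Qed.

Lemma sumsnd_nseq n a : sumsnd (nseq n (a, 0)) = 0.
Proof. by elim: n. Qed.

Lemma sumE_nseq n a b : sumE (nseq n ((a, b), (a, b))) = 0.
Proof. elim: n => //= n ->; lia. Qed.

Definition psi (p : P) : P := (p.1.*2, p.2.*2).

Lemma psi_reach S S' : greach wP cP S S' -> greach wP cP (List.map psi S) (List.map psi S').
Proof.
move=> h; apply: (@transfer _ _ wP cP wP cP psi (fun _ => True) _ S S' h I).
move=> S0 u v rest _ hp h1 h2.
split => //. split.
  move=> t /h1; rewrite /wP /psi /=; lia.
split.
  move=> t /h2; rewrite /wP /psi /=; lia.
rewrite /psi /cP /absdiff /=. f_equal; lia.
Qed.

Lemma main_num N : forall n, n <= N -> 1 <= n -> forall p,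
  greach wP cP (nseq n (1,0)) [:: p] -> p.2 = f n.
Proof.
elim: N => [|N IH] n hn h1 p hp; first lia.
case: (leqP n 1) => hn1.
  have e : n = 1 by lia. subst n.
  inversion hp; subst; first by [].
  case: H => [u [v [rest [hp' _]]]].
  have := Permutation_length hp'. by [].
have [x [ex|ex]] := parity n; subst n.
-
  case: x hn h1 hn1 hp => [|x'] hn h1 hn1 hp; first by [].
  set x := x'.+1.
  have ph := phase1 x 0 nil ltac:(by []).
  rewrite add0n !List.app_nil_r in ph.
  have ph' : greach wP cP (nseq x.*2 (1,0)) (nseq x (2,0)) := ph.
  have [q hq] := @gexists _ wP cP x' (nseq x (1,0)) (length_nseq _ _ _).
  have hq1 := IH x ltac:(rewrite /x; lia) ltac:(by []) q hq.
  have hq2 := @psi_reach _ _ hq.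
  rewrite map_nseqL in hq2.
  have tot := greach_trans ph' hq2.
  have := @determ _ _ hp p erefl _ _ tot (Permutation_refl _).
  rewrite f_even /= hq1. lia.
-
  case: x hn h1 hn1 hp => [|x'] hn h1 hn1 hp; first by [].
  set x := x'.+1.
  have ph := phase1 x 0 [:: (1,0)] ltac:(by move=> t [<-|[]]).
  rewrite add0n in ph.
  have ph' : greach wP cP (nseq x.*2 (1,0) ++ [:: (1,0)])%list (nseq x (2,0) ++ [:: (1,0)])%list := ph.
  have st : gstep wP cP (nseq x (2,0) ++ [:: (1,0)])%list ((3,1) :: nseq x' (2,0)).
    exists (1,0), (2,0), (nseq x' (2,0)); split.
      exact: (Permutation_sym (Permutation_cons_append _ _)).
    split.
      move=> t [<-|/In_nseq ->] //.
    split; last by [].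
    by move=> t /In_nseq ->.
  have [r hr] := @gexists _ wP cP x' ((3,1) :: nseq x' (2,0)) (f_equal S (length_nseq _ _ _)).
  have tot := greach_trans ph' (gnext st hr).
  rewrite nseq_snoc in hp.
  have hpr := @determ _ _ hp p erefl _ _ tot (Permutation_refl _).
  set Q0 : list Q := ((1,0),(2,0)) :: nseq x' ((1,0),(1,0)).
  have [q hq] := @gexists _ wQ cQ x' Q0 (f_equal S (length_nseq _ _ _)).
  have inv0 : InvQ Q0.
    split; last by rewrite /Q0 /= sumE_nseq.
    move=> t [<-|/In_nseq ->]; rewrite /good /=; lia.
  have hq1 := @transQ fst ltac:(move=> u t [? ?] [? ?]; rewrite /wQ /wP; lia)
    ltac:(by []) _ _ hq inv0.
  rewrite /Q0 /= map_nseqL /= in hq1.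
  have e1 := IH x ltac:(rewrite /x; lia) ltac:(by []) q.1 hq1.
  have hq2 := @transQ snd ltac:(move=> u t [? ?] [? ?]; rewrite /wQ /wP; lia)
    ltac:(by []) _ _ hq inv0.
  rewrite /Q0 /= map_nseqL /= in hq2.
  have st2 : gstep wP cP (nseq x.+1 (1,0)) ((2,0) :: nseq x' (1,0)).
    exists (1,0), (1,0), (nseq x' (1,0)); split; first exact: Permutation_refl.
    split.
      move=> t [<-|/In_nseq ->] //.
    split; last by [].
    by move=> t /In_nseq ->.
  have e2 := IH x.+1 ltac:(rewrite /x; lia) ltac:(by []) q.2 (gnext st2 hq2).
  have hq3 := @transQ sig ltac:(move=> u t _ _; by [])
    ltac:(move=> u v [? ?] [? ?] huv; rewrite /wQ in huv;
          rewrite /sig /cQ /cP /absdiff /=; f_equal; lia) _ _ hq inv0.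
  rewrite /Q0 /= map_nseqL /= in hq3.
  have := @determ _ _ hr r erefl _ _ hq3 (Permutation_refl _).
  rewrite /= !sumsnd_nseq f_odd // -e1 -e2 /sig /=. move=> hh; rewrite /x in hpr; lia.
Qed.

Theorem proposition6 (n : nat) (T : tree) :
  1 <= n -> GFB n T -> is_cn n (colless T).
Proof.
move=> hn hG.
have h := @gfb_to_P _ _ hG.
rewrite map_nseqL in h.
have e : colless T = f n := @main_num n n (leqnn n) hn (phiT T) h.
rewrite e; split.
  have [t [h1 h2]] := @balanced n hn. by exists t.
move=> t <-; exact: lower.
Qed.
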